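(* For $g\ge0$, let $N_2(g)$ denote the number of gapsets of genus $g$ and depth at most $2$. Then for all $g\ge 2$, $$N_2(g)=N_2(g-1)+N_2(g-2).$$
   Context: A gapset is a finite set $G \subset \mathbb{N}_+=\{1,2,3,\dots\}$ such that for all $z \in G$, whenever $z=x+y$ with $x,y\in\mathbb{N}_+$, we have $x\in G$ or $y\in G$. The multiplicity of $G$ is the least $m\ge 1$ with $m\notin G$; its conductor is $c=\max G+1$ ($c=0$ if $G=\emptyset$); its genus is $|G|$; its depth is $\lceil c/m\rceil$. *)

(* Defs.v *)
From mathcomp Require Import all_boot.
From mathcomp Require Import finmap.
Set Implicit Arguments. Unset Strict Implicit. Unset Printing Implicit Defensive.
Local Open Scope fset_scope.

Definition is_gapset (G : {fset nat}) : Prop :=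
  (forall z, z \in G -> 0 < z) /\
  (forall x y, 0 < x -> 0 < y -> (x + y)%N \in G -> (x \in G) \/ (y \in G)).

Definition genus (G : {fset nat}) : nat := #|` G|.

Definition conductor (G : {fset nat}) : nat :=
  if G == fset0 then 0 else (\max_(z <- G) z).+1.

(* multiplicity = least m >= 1 with m \notin G.  Such an m lies in
   [1, conductor G + 1] (the conductor itself, or 1 if G is empty, is a
   non-gap), so it is found by a bounded search over iota 1 (conductor G).+1. *)
Definition multiplicity (G : {fset nat}) : nat :=
  (find (fun m => m \notin G) (iota 1 (conductor G).+1)).+1.

Definition depth (G : {fset nat}) : nat :=
  (conductor G + (multiplicity G).-1) %/ multiplicity G.

Definition gapset_g_depth_le2 (g : nat) (G : {fset nat}) : Prop :=
  is_gapset G /\ genus G = g /\ depth G <= 2.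

(* L enumerates (without repetition) exactly the gapsets of genus g and depth <= 2;
   then size L = N_2(g). *)
Definition enumerates_N2 (g : nat) (L : seq {fset nat}) : Prop :=
  uniq L /\ (forall G, G \in L <-> gapset_g_depth_le2 g G).

(* Main.v *)
Require Import Defs.
From mathcomp Require Import all_boot finmap zify.
Set Implicit Arguments. Unset Strict Implicit.
Local Open Scope fset_scope.

Definition good (m : nat) (G : {fset nat}) : Prop :=
  [/\ 0 < m, (forall x, 0 < x < m -> x \in G), m \notin G
    & (forall x, x \in G -> 0 < x < m.*2)].

Lemma mem_lt_cond (G : {fset nat}) x : x \in G -> x < conductor G.
Proof.
rewrite /conductor; case: eqP => [->|_]; first by rewrite in_fset0.
move=> hx; rewrite ltnS; exact: (leq_bigmax_seq x).
Qed.

Lemma cond_le (G : {fset nat}) n : (forall x, x \in G -> x < n) -> conductor G <= n.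
Proof.
move=> h; rewrite /conductor; case: eqP => // /eqP /fset0Pn [y hy].
have := h y hy; case: n h => // n h _; rewrite ltnS.
apply/bigmax_leqP_seq => i hi _; have := h i hi; lia.
Qed.

Lemma mult_spec (G : {fset nat}) :
  [/\ 0 < multiplicity G, multiplicity G \notin G &
     forall x, 0 < x < multiplicity G -> x \in G].
Proof.
rewrite /multiplicity.
set s := iota 1 (conductor G).+1.
set p := fun m => m \notin G.
have hs : has p s.
  apply/hasP; exists (conductor G).+1; first by rewrite mem_iota; lia.
  rewrite /p; apply/negP => /mem_lt_cond; lia.
have hf : find p s < size s by rewrite -has_find.
have hsz : size s = (conductor G).+1 by rewrite size_iota.
split => //.
  have := nth_find 0 hs; rewrite /p nth_iota; last by rewrite -hsz.
  by rewrite add1n.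
move=> x hx; have := @before_find _ 0 p s x.-1.
rewrite nth_iota; last by rewrite -hsz; lia.
rewrite /p => h; have := h ltac:(case/andP: hx => ha hb; by rewrite -ltnS prednK).
have -> : (1 + x.-1)%N = x by lia.
by move/negbFE.
Qed.

Lemma good_mult m G : good m G -> multiplicity G = m.
Proof.
case=> m0 hb hm hG; case: (mult_spec G) => h0 h1 h2.
apply/eqP; rewrite eqn_leq; apply/andP; split; rewrite leqNgt; apply/negP => h.
  by move: hm; rewrite h2 // m0 h.
by move: h1; rewrite hb // h0 h.
Qed.

Lemma depth_le2 m c : 0 < m -> ((c + m.-1) %/ m <= 2) = (c <= m.*2).
Proof. move=> hm; rewrite -ltnS ltn_divLR //; lia. Qed.

Lemma P_good G : is_gapset G -> depth G <= 2 -> good (multiplicity G) G.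
Proof.
case=> hpos _; rewrite /depth; case: (mult_spec G) => h0 h1 h2.
rewrite depth_le2 // => hc; split => // x hx.
have := hpos x hx; have := mem_lt_cond hx; lia.
Qed.

Lemma good_P m G : good m G -> is_gapset G /\ depth G <= 2.
Proof.
move=> hg; have hm := good_mult hg; case: hg => m0 hb hnm hG; split.
  split; first by move=> z /hG; lia.
  move=> x y x0 y0 /hG hxy.
  have [hx|hx] : x < m \/ y < m by lia.
    by left; apply: hb; lia.
  by right; apply: hb; lia.
rewrite /depth hm depth_le2 //; apply: cond_le => x /hG; lia.
Qed.

Definition sh (m x : nat) := if x < m then x else x.+1.
Lemma sh_inj m : injective (sh m).
Proof. move=> x y; rewrite /sh; case: ifP; case: ifP; lia. Qed.
Lemma sh_neq m x : (sh m x == m) = false.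
Proof. rewrite /sh; case: ifP; lia. Qed.

Definition up0 m (G : {fset nat}) : {fset nat} := m |` [fset sh m x | x in G].
Definition up1 m (G : {fset nat}) : {fset nat} :=
  m |` (m.*2.+1 |` [fset sh m x | x in G]).

Lemma mem_sh m (G : {fset nat}) x : (sh m x \in [fset sh m x | x in G]) = (x \in G).
Proof. by rewrite mem_imfset //; apply: sh_inj. Qed.

Lemma good_up0 m G : good m G -> good m.+1 (up0 m G).
Proof.
case=> m0 hb hm hG; split => //.
- move=> x hx; rewrite in_fset1U; case: eqP => //= hxm.
  apply/imfsetP; exists x; first by apply: hb; lia.
  by rewrite /sh ifT //; lia.
- rewrite in_fset1U negb_or; apply/andP; split; first lia.
  apply/imfsetP => -[y hy]; rewrite /sh; case: ifP; first lia.
  by move=> _ [e]; rewrite e hy in hm.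
- move=> x; rewrite in_fset1U => /orP [/eqP ->|]; first lia.
  case/imfsetP => y /hG hy ->; rewrite /sh; case: ifP; lia.
Qed.

Lemma good_up1 m G : good m G -> good m.+1 (up1 m G).
Proof.
case=> m0 hb hm hG; split => //.
- move=> x hx; rewrite in_fset1U; case: eqP => //= hxm.
  rewrite in_fset1U; apply/orP; right.
  apply/imfsetP; exists x; first by apply: hb; lia.
  by rewrite /sh ifT //; lia.
- rewrite !in_fset1U !negb_or; apply/andP; split; first lia.
  apply/andP; split; first lia.
  apply/imfsetP => -[y hy]; rewrite /sh; case: ifP; first lia.
  by move=> _ [e]; rewrite e hy in hm.
- move=> x; rewrite !in_fset1U => /orP [/eqP ->|]; first lia.
  case/orP => [/eqP ->|]; first lia.
  case/imfsetP => y /hG hy ->; rewrite /sh; case: ifP; lia.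
Qed.

Lemma genus_up0 m G : genus (up0 m G) = (genus G).+1.
Proof.
rewrite /genus /up0 cardfsU1 card_imfset //=; last exact: sh_inj.
have -> : m \notin [fset sh m x | x in G].
  by apply/imfsetP => -[y _ /eqP]; rewrite eq_sym sh_neq.
done.
Qed.

Lemma genus_up1 m G : good m G -> genus (up1 m G) = (genus G).+2.
Proof.
case=> m0 hb hm hG.
rewrite /genus /up1 !cardfsU1 card_imfset //=; last exact: sh_inj.
have -> : m.*2.+1 \notin [fset sh m x | x in G].
  apply/imfsetP => -[y /hG hy]; rewrite /sh; case: ifP; lia.
rewrite in_fset1U negb_or.
have -> : m != m.*2.+1 by lia.
have -> : m \notin [fset sh m x | x in G].
  by apply/imfsetP => -[y _ /eqP]; rewrite eq_sym sh_neq.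
done.
Qed.

Lemma up0_inj m1 m2 G1 G2 : good m1 G1 -> good m2 G2 -> up0 m1 G1 = up0 m2 G2 -> G1 = G2.
Proof.
move=> h1 h2 e.
have e12 : m1 = m2.
  have := good_mult (good_up0 h1); have := good_mult (good_up0 h2).
  rewrite e => -> [] //.
subst m2; apply/fsetP => x.
have : (sh m1 x \in up0 m1 G1) = (sh m1 x \in up0 m1 G2) by rewrite e.
by rewrite !in_fset1U sh_neq /= !mem_sh.
Qed.

Lemma up1_inj m1 m2 G1 G2 : good m1 G1 -> good m2 G2 -> up1 m1 G1 = up1 m2 G2 -> G1 = G2.
Proof.
move=> h1 h2 e.
have e12 : m1 = m2.
  have := good_mult (good_up1 h1); have := good_mult (good_up1 h2).
  rewrite e => -> [] //.
subst m2; apply/fsetP => x.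
have : (sh m1 x \in up1 m1 G1) = (sh m1 x \in up1 m1 G2) by rewrite e.
rewrite !in_fset1U sh_neq /= !mem_sh.
have -> : (sh m1 x == m1.*2.+1) = (x == m1.*2).
  rewrite /sh; case: ifP; lia.
case: eqP => // ->.
case: h1 => _ _ _ /(_ m1.*2); case: (m1.*2 \in G1); first lia.
case: h2 => _ _ _ /(_ m1.*2); case: (m1.*2 \in G2); first lia.
done.
Qed.

Lemma up_disj m1 m2 G1 G2 : good m1 G1 -> good m2 G2 -> up0 m1 G1 <> up1 m2 G2.
Proof.
move=> h1 h2 e.
have e12 : m1 = m2.
  have := good_mult (good_up0 h1); have := good_mult (good_up1 h2).
  rewrite e => -> [] //.
subst m2.
have : m1.*2.+1 \in up1 m1 G2 by rewrite !in_fset1U eqxx orbT.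
rewrite -e in_fset1U; case/orP; first lia.
case: h1 => _ _ _ hG.
case/imfsetP => y /hG hy; rewrite /sh; case: ifP; lia.
Qed.

Definition unsh (m x : nat) := if x < m then x else x.-1.

Lemma down m G : good m G -> 2 <= m ->
  (exists G', good m.-1 G' /\ up0 m.-1 G' = G) \/
  (exists G', good m.-1 G' /\ up1 m.-1 G' = G).
Proof.
move=> hg h2; case: hg => m0 hb hm hG.
set m' := m.-1.
set D := [fset unsh m' x | x in [fset x in G | (x != m') && (x != m.*2.-1)]].
have hm'G : m' \in G by apply: hb; lia.
have shD : forall z, (z \in [fset sh m' x | x in D]) = [&& z \in G, z != m' & z != m.*2.-1].
  move=> z; apply/imfsetP/idP.
    case=> x /imfsetP [y]; rewrite !inE /= => /andP [hy /andP [hy1 hy2]] -> ->.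
    have hym : y != m by apply/eqP => e; rewrite -e hy in hm.
    have -> : sh m' (unsh m' y) = y by rewrite /sh /unsh; case: ifP; case: ifP; lia.
    by rewrite hy hy1 hy2.
  case/and3P => hz hz1 hz2; exists (unsh m' z).
    by apply/imfsetP; exists z => //; rewrite !inE /= hz hz1 hz2.
  have hzm : z != m by apply/eqP => e; rewrite -e hz in hm.
  rewrite /sh /unsh; case: ifP; case: ifP; lia.
have gD : good m' D.
  split; first lia.
  - move=> x hx; apply/imfsetP; exists x.
      rewrite !inE /= hb /=; [lia|lia].
    by rewrite /unsh ifT //; lia.
  - apply/imfsetP => -[y]; rewrite !inE /= => /andP [hy /andP [hy1 hy2]].
    have hym : y != m by apply/eqP => e; rewrite -e hy in hm.
    rewrite /unsh; case: ifP; lia.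
  - move=> x /imfsetP [y]; rewrite !inE /= => /andP [hy /andP [hy1 hy2]] ->.
    have hym : y != m by apply/eqP => e; rewrite -e hy in hm.
    have := hG y hy; rewrite /unsh; case: ifP; lia.
have e2 : m'.*2.+1 = m.*2.-1 by rewrite /m'; lia.
case hl: (m.*2.-1 \in G); [right|left]; exists D; split => //;
  apply/fsetP => z; rewrite !in_fset1U shD ?e2;
  (case: (z =P m') => [->|_]; first by rewrite ?hl ?hm'G /= ?orbT);
  (case: (z =P m.*2.-1) => [->|_];
  rewrite ?hl ?hm'G /= ?andbT ?andbF ?orbT ?orbF //).
Qed.

Lemma good_m1 G : good 1 G -> G = fset0.
Proof.
case=> _ _ h1 hG; apply/fsetP => x; rewrite in_fset0.
apply/negP => hx; have := hG x hx; case: (x =P 1) => [e|]; first by rewrite -e hx in h1.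
lia.
Qed.

Lemma P_iff g G : gapset_g_depth_le2 g G <-> good (multiplicity G) G /\ genus G = g.
Proof.
split.
  by case=> hg [hgen hd]; split => //; apply: P_good.
case=> hg hgen; have [h1 h2] := good_P hg; by split.
Qed.

Definition U0 G := up0 (multiplicity G) G.
Definition U1 G := up1 (multiplicity G) G.

Lemma key g L1 L2 : 1 <= g -> enumerates_N2 g.-1 L1 -> uniq L2 ->
  (forall G, G \in L2 <-> good (multiplicity G) G /\ (genus G).+2 = g) ->
  enumerates_N2 g (map U0 L1 ++ map U1 L2).
Proof.
move=> g1 [u1 e1] u2 e2.
have g1' : forall G, G \in L1 -> good (multiplicity G) G /\ genus G = g.-1.
  by move=> G /e1 /P_iff.
have g2' : forall G, G \in L2 -> good (multiplicity G) G /\ (genus G).+2 = g.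
  by move=> G /e2.
split.
  rewrite cat_uniq; apply/and3P; split.
  - rewrite map_inj_in_uniq // => x y hx hy.
    exact: up0_inj (g1' x hx).1 (g1' y hy).1.
  - apply/hasPn => y /mapP [G2 h2 ->]; apply/negP => /mapP [G1 h1 e].
    exact: up_disj (g1' G1 h1).1 (g2' G2 h2).1 (esym e).
  - rewrite map_inj_in_uniq // => x y hx hy.
    exact: up1_inj (g2' x hx).1 (g2' y hy).1.
move=> G; rewrite mem_cat; split.
  case/orP => /mapP [G' hG' ->].
    case: (g1' G' hG') => hg hgen; apply/P_iff.
    have hgu := good_up0 hg; rewrite (good_mult hgu); split => //.
    by rewrite /U0 genus_up0 hgen; lia.
  case: (g2' G' hG') => hg hgen; apply/P_iff.
  have hgu := good_up1 hg; rewrite (good_mult hgu); split => //.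
  by rewrite /U1 genus_up1.
case/P_iff => hg hgen.
have hm2 : 2 <= multiplicity G.
  have [m0 _ _ _] := hg; case hm: (multiplicity G) m0 => [|[|n]] // _.
  move: hg; rewrite hm => /good_m1 e; move: hgen; rewrite e /genus cardfs0; lia.
case: (down hg hm2) => -[G' [hg' e]]; apply/orP; [left|right]; apply/mapP; exists G'.
- apply/e1/P_iff; rewrite (good_mult hg'); split => //.
  by move: hgen; rewrite -e genus_up0; lia.
- by rewrite /U0 (good_mult hg').
- apply/e2; rewrite (good_mult hg'); split => //.
  by move: hgen; rewrite -e genus_up1.
- by rewrite /U1 (good_mult hg').
Qed.

Lemma exists_enum g : exists L, enumerates_N2 g L.
Proof.
elim: g {-2}g (leqnn g) => [|n IH] g hg.
  have -> : g = 0 by lia.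
  exists [:: fset0]; split => // G; rewrite inE; split.
    move/eqP => ->; apply/P_iff.
    have h1 : good 1 fset0 by split; [done| move=> x; lia | by rewrite in_fset0 | by move=> x; rewrite in_fset0].
    by rewrite (good_mult h1).
  by case=> _ [/cardfs0_eq -> _].
case: g hg => [|g] hg; first by apply: IH.
have [L1 h1] := IH g ltac:(lia).
case: g hg h1 => [|g] hg h1.
  exists (map U0 L1 ++ map U1 [::]); apply: key => //.
  by move=> G; rewrite in_nil; split => // -[].
have [L2 [u2 h2]] := IH g ltac:(lia).
exists (map U0 L1 ++ map U1 L2); apply: key => //.
move=> G; rewrite h2 P_iff; split; case=> a b; split => //; lia.
Qed.

Local Close Scope fset_scope.
Theorem mainTheorem10 :
  (forall g : nat, exists L : seq {fset nat}, enumerates_N2 g L) /\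
  (forall (g : nat) (L0 L1 L2 : seq {fset nat}),
      2 <= g ->
      enumerates_N2 g L0 -> enumerates_N2 g.-1 L1 -> enumerates_N2 g.-2 L2 ->
      size L0 = size L1 + size L2).
Proof.
split; first exact: exists_enum.
move=> g L0 L1 L2 hg h0 h1 [u2 h2].
have hL : enumerates_N2 g (map U0 L1 ++ map U1 L2).
  apply: key => //; first lia.
  move=> G; rewrite h2 P_iff; split; case=> a b; split => //; lia.
case: h0 => u0 e0; case: hL => uL eL.
have hp : perm_eq L0 (map U0 L1 ++ map U1 L2).
  apply: uniq_perm => // G; apply/idP/idP => hG.
    by apply/eL/e0.
  by apply/e0/eL.
by rewrite (perm_size hp) size_cat !size_map.
Qed.
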